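(* Let $\varphi$ be an increasing submodular setfunction on a sigma-algebra $(J,\mathcal{B})$, continuous from above, with $\varphi(\emptyset)=0$. Let $\mathcal{A}\subseteq\mathcal{B}$ be a set-algebra generating $\mathcal{B}$ (as a sigma-algebra). Then for every $X\in\mathcal{B}$ and every $\varepsilon>0$ there exists $Y\in\mathcal{A}$ such that $\varphi(X\triangle Y)<\varepsilon$.
   Context: $\varphi$ is increasing if $X\subseteq Y$ implies $\varphi(X)\le\varphi(Y)$, submodular if $\varphi(X)+\varphi(Y)\ge\varphi(X\cap Y)+\varphi(X\cup Y)$ for all $X,Y\in\mathcal{B}$, and continuous from above if for every decreasing sequence $X_1\supseteq X_2\supseteq\dots$ in $\mathcal{B}$ we have $\varphi(\bigcap_nX_n)=\lim_n\varphi(X_n)$. $X\triangle Y$ is the symmetric difference. *)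

(* Defs.v *)
From HB Require Import structures.
From mathcomp Require Import all_boot all_order all_algebra.
From mathcomp Require Import all_classical all_reals all_analysis.
Set Implicit Arguments. Unset Strict Implicit. Unset Printing Implicit Defensive.
Import Order.TTheory GRing.Theory Num.Theory numFieldNormedType.Exports.

Local Open Scope classical_set_scope.
Local Open Scope ring_scope.

Definition set_algebra (J : Type) (A : set (set J)) : Prop :=
  setring A /\ A setT.

Definition increasing_on (J : Type) (R : realType) (B : set (set J))
  (phi : set J -> R) : Prop :=
  forall X Y, B X -> B Y -> X `<=` Y -> phi X <= phi Y.

Definition submodular_on (J : Type) (R : realType) (B : set (set J))
  (phi : set J -> R) : Prop :=
  forall X Y, B X -> B Y -> phi (X `&` Y) + phi (X `|` Y) <= phi X + phi Y.

Definition continuous_from_above_on (J : Type) (R : realType)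
  (B : set (set J)) (phi : set J -> R) : Prop :=
  forall F : (set J)^nat, (forall n, B (F n)) -> nonincreasing_seq F ->
    (fun n => phi (F n)) @ \oo --> (phi (\bigcap_n F n) : R).

(* Main.v *)
Require Import Defs.
From HB Require Import structures.
From mathcomp Require Import all_boot all_order all_algebra.
From mathcomp Require Import all_classical all_reals all_analysis.
Import Order.TTheory GRing.Theory Num.Theory numFieldNormedType.Exports.
Local Open Scope classical_set_scope.
Local Open Scope ring_scope.

Lemma setY_compl (J : Type) (X Y : set J) :
  (setT `\` X) `+` (setT `\` Y) = X `+` Y.
Proof.
apply/seteqP; split=> x /=; rewrite /setY /setD /setU /setC /=;
case: (pselect (X x)); case: (pselect (Y x)); tauto.
Qed.

Lemma setY_U2 (J : Type) (X1 X2 Y1 Y2 : set J) :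
  (X1 `|` X2) `+` (Y1 `|` Y2) `<=` (X1 `+` Y1) `|` (X2 `+` Y2).
Proof.
move=> x; rewrite /setY /setD /setU /setC /=;
case: (pselect (X1 x)); case: (pselect (X2 x));
case: (pselect (Y1 x)); case: (pselect (Y2 x)); tauto.
Qed.

Lemma setY_tri (J : Type) (U P Y : set J) : P `<=` U ->
  U `+` Y `<=` (U `\` P) `|` (P `+` Y).
Proof.
move=> PU x; have := PU x; rewrite /setY /setD /setU /setC /=;
case: (pselect (U x)); case: (pselect (P x)); case: (pselect (Y x)); tauto.
Qed.

Theorem lemma4p2 (R : realType) (J : Type) (B A : set (set J))
  (phi : set J -> R) :
  sigma_algebra setT B ->
  increasing_on B phi -> submodular_on B phi ->
  continuous_from_above_on B phi -> phi set0 = 0 ->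
  set_algebra A -> A `<=` B -> <<s A >> = B ->
  forall X, B X -> forall eps : R, 0 < eps ->
    exists2 Y, A Y & phi (X `+` Y) < eps.
Proof.
move=> [B0 BD BU] inc sub cont phi0 [[A0 AU AD] AT] AB gen.
have BC : forall X, B X -> B (~` X) by move=> X /BD; rewrite setTD.
have BU2 : forall X Y, B X -> B Y -> B (X `|` Y).
  by move=> X Y bX bY; rewrite -bigcup2E; apply: BU => -[|[|n]].
have BI : forall X Y, B X -> B Y -> B (X `&` Y).
  move=> X Y bX bY; rewrite -[X `&` Y]setCK setCI.
  by apply/BC/BU2; apply: BC.
have BD2 : forall X Y, B X -> B Y -> B (X `\` Y).
  by move=> X Y bX bY; rewrite setDE; apply/BI => //; apply: BC.
have BY : forall X Y, B X -> B Y -> B (X `+` Y).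
  by move=> X Y bX bY; rewrite /setY; apply: BU2; apply: BD2.
have ge0 : forall X, B X -> 0 <= phi X.
  by move=> X bX; rewrite -phi0; apply: inc => //.
have subadd : forall X Y, B X -> B Y -> phi (X `|` Y) <= phi X + phi Y.
  move=> X Y bX bY; apply: le_trans (sub _ _ bX bY).
  by rewrite lerDr; apply/ge0/BI.
pose G := fun X => B X /\ forall e : R, 0 < e -> exists2 Y, A Y & phi (X `+` Y) < e.
have GU2 : forall X1 X2, G X1 -> G X2 -> G (X1 `|` X2).
  move=> X1 X2 [b1 h1] [b2 h2]; split; first exact: BU2.
  move=> e e0.
  have e20 : 0 < e / 2 by rewrite divr_gt0.
  have [Y1 a1 p1] := h1 _ e20; have [Y2 a2 p2] := h2 _ e20.
  exists (Y1 `|` Y2); first exact: AU.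
  have bY1 := AB _ a1; have bY2 := AB _ a2.
  have bL : B ((X1 `|` X2) `+` (Y1 `|` Y2)) by apply: BY; apply: BU2.
  have bR : B ((X1 `+` Y1) `|` (X2 `+` Y2)) by apply: BU2; apply: BY.
  apply: le_lt_trans (inc _ _ bL bR (@setY_U2 _ X1 X2 Y1 Y2)) _.
  apply: le_lt_trans (subadd _ _ (BY _ _ b1 bY1) (BY _ _ b2 bY2)) _.
  by rewrite [e](splitr e); apply: ltrD.
have sG : sigma_algebra setT G.
  split.
  - split => // e e0; exists set0 => //; by rewrite setYK phi0.
  - move=> X [bX hX]; split; first exact: BD.
    move=> e e0; have [Y aY pY] := hX e e0.
    by exists (setT `\` Y); [apply: AD | rewrite setY_compl].
  - move=> F GF.
    pose P := fix P n := if n is n'.+1 then P n' `|` F n' else set0.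
    have GP : forall n, G (P n).
      elim=> [|n ih] /=; last exact: GU2.
      split => // e e0; exists set0 => //; by rewrite setYK phi0.
    have PS : forall n k, P n `<=` P (n + k)%N.
      move=> n; elim=> [|k ih]; first by rewrite addn0.
      by rewrite addnS /=; apply: subset_trans ih _; apply: subsetUl.
    have PU : forall n, P n `<=` \bigcup_k F k.
      elim=> [|n ih] /=; first by [].
      by move=> x [/ih //|Fx]; exists n.
    have bU : B (\bigcup_k F k) by apply: BU => n; case: (GF n).
    split => // e e0.
    pose D := fun n => \bigcup_k F k `\` P n.
    have bD : forall n, B (D n) by move=> n; apply: BD2 => //; case: (GP n).
    have nD : nonincreasing_seq D.
      move=> n m nm; apply/subsetPset => x [Ux nPx]; split => // Px; apply: nPx.
      by rewrite -(subnKC nm); apply: PS.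
    have cD := cont D bD nD.
    have DE : \bigcap_n D n = set0.
      apply/seteqP; split => // x Dx.
      have [[j _ Fj] _] := Dx 0%N I.
      have [_] := Dx j.+1 I; apply => /=; by right.
    rewrite DE phi0 in cD.
    have e20 : 0 < e / 2 by rewrite divr_gt0.
    have [N _ HN] := (iffLR (cvgrPdist_lt _ _) cD) _ e20.
    have hN := HN N (leqnn N); rewrite sub0r normrN ger0_norm in hN; last exact: ge0.
    have [_ hP] := GP N; have [Y aY pY] := hP _ e20.
    exists Y => //.
    have bY := AB _ aY; have bPN : B (P N) by case: (GP N).
    have bL : B (\bigcup_k F k `+` Y) by apply: BY.
    have bR : B (D N `|` (P N `+` Y)) by apply: BU2 => //; apply: BY.
    apply: le_lt_trans (inc _ _ bL bR (@setY_tri _ _ _ Y (PU N))) _.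
    apply: le_lt_trans (subadd _ _ (bD N) (BY _ _ bPN bY)) _.
    by rewrite [e](splitr e); apply: ltrD.
have AG : A `<=` G.
  move=> X aX; split; first exact: AB.
  by move=> e e0; exists X => //; rewrite setYK phi0.
move=> X bX; rewrite -gen in bX.
have GX : G X by apply: (@smallest_sub _ (sigma_algebra setT) A G sG AG X bX).
by case: GX.
Qed.
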